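(* Let $\Delta$ be a connected graph with a voltage assignment $\ell':D(\Delta)\to N'$ into a group $N'$. Let $T$ be the normal closure in $N'$ of the subgroup generated by the voltages (with respect to $\ell'$) of all triangles. Let $N=N'/T$ and $\ell(u,v)=T\ell'(u,v)$. Let $M$ be the subgroup of $N$ generated by the voltages with respect to $\ell$ of all cycles, and let $\Gamma$ be the lift of $\Delta$ with respect to $\ell$. Then the map $\alpha:V(\Gamma)\to V(\Delta)$, $(v,n)\mapsto v$, is a local isomorphism, and every connected component of $\Gamma$ is an $|M|$-fold cover of $\Delta$.
   Context: Graphs are simple and undirected; $u\perp v$ denotes adjacency and $D(\Delta)$ is the set of darts (ordered pairs $(u,v)$ with $u\perp v$). A voltage assignment is a map $\ell:D(\Delta)\to N$ into a group with $\ell(u,v)=\ell(v,u)^{-1}$. The voltage of a path $v_0\perp v_1\perp\dots\perp v_k$ is $\ell(v_0,v_1)\ell(v_1,v_2)\cdots\ell(v_{k-1},v_k)$; a triangle $u,v,w$ has voltage $\ell(u,v)\ell(v,w)\ell(w,u)$. The lift of $\Delta$ with respect to $\ell$ has vertex set $V(\Delta)\times N$, with $(u,m)\perp(v,n)$ iff $u\perp v$ and $\ell(u,v)=mn^{-1}$. The local graph at a vertex is the subgraph induced on its neighbourhood; a local isomorphism is an adjacency-preserving map that maps the local graph at each vertex isomorphically onto the local graph at its image. For connected graphs, $\Gamma$ is a cover of $\Delta$ if a local isomorphism $\Gamma\to\Delta$ exists, and a $k$-fold cover if its fibres have size $k$.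
   Formalization: M is the subgroup of N generated by the voltages (with respect to ℓ) of the closed walks starting and ending at one fixed but arbitrary vertex, rather than of all cycles. The statement above fails without it. *)

(* Defs.v *)
From HB Require Import structures.
From mathcomp Require Import all_boot.
From mathcomp Require Import monoid.

Set Implicit Arguments.
Unset Strict Implicit.
Unset Printing Implicit Defensive.

Local Open Scope group_scope.

Definition is_subgroup (G : groupType) (H : G -> Prop) : Prop :=
  H 1 /\ (forall x y, H x -> H y -> H (x * y)) /\ (forall x, H x -> H x^-1).

Definition is_normal_subgroup (G : groupType) (H : G -> Prop) : Prop :=
  is_subgroup H /\ (forall x g, H x -> H (g^-1 * (x * g))).

Definition gen_subgroup (G : groupType) (S : G -> Prop) : G -> Prop :=
  fun x => forall H : G -> Prop, is_subgroup H -> (forall s, S s -> H s) -> H x.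

Definition normal_closure (G : groupType) (S : G -> Prop) : G -> Prop :=
  fun x => forall H : G -> Prop, is_normal_subgroup H -> (forall s, S s -> H s) -> H x.

Definition simple_graph (V : Type) (adj : V -> V -> Prop) : Prop :=
  (forall u v, adj u v -> adj v u) /\ (forall u, ~ adj u u).

Fixpoint is_walk (V : Type) (adj : V -> V -> Prop) (s : seq V) : Prop :=
  match s with
  | x :: ((y :: _) as t) => adj x y /\ is_walk adj t
  | _ => True
  end.

Definition reachable (V : Type) (adj : V -> V -> Prop) (x y : V) : Prop :=
  exists s : seq V, is_walk adj (x :: s) /\ last x s = y.

Definition connected_graph (V : Type) (adj : V -> V -> Prop) : Prop :=
  forall x y : V, reachable adj x y.

(* l : V -> V -> N, only its values on darts (u,v) with u ⊥ v matter *)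
Definition voltage_assignment (V : Type) (adj : V -> V -> Prop) (N : groupType)
  (l : V -> V -> N) : Prop :=
  forall u v, adj u v -> l u v = (l v u)^-1.

Fixpoint walk_voltage (V : Type) (N : groupType) (l : V -> V -> N) (s : seq V) : N :=
  match s with
  | x :: ((y :: _) as t) => l x y * walk_voltage l t
  | _ => 1
  end.

Definition triangle_voltages (V : Type) (adj : V -> V -> Prop) (N : groupType)
  (l : V -> V -> N) : N -> Prop :=
  fun g => exists u v w, [/\ adj u v, adj v w, adj w u & g = l u v * l v w * l w u].

Definition lift_adj (V : Type) (adj : V -> V -> Prop) (N : groupType)
  (l : V -> V -> N) : V * N -> V * N -> Prop :=
  fun x y => adj x.1 y.1 /\ l x.1 y.1 = x.2 * (y.2)^-1.

(* f is adjacency preserving and maps the local graph at each vertex x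
   (the subgraph induced on the neighbourhood of x) isomorphically onto
   the local graph at f x *)
Definition local_iso (A B : Type) (adjA : A -> A -> Prop) (adjB : B -> B -> Prop)
  (f : A -> B) : Prop :=
  (forall x y, adjA x y -> adjB (f x) (f y)) /\
  (forall x,
     (forall y z, adjA x y -> adjA x z -> f y = f z -> y = z) /\
     (forall b, adjB (f x) b -> exists y, adjA x y /\ f y = b) /\
     (forall y z, adjA x y -> adjA x z -> adjB (f y) (f z) -> adjA y z)).

Definition equipotent (A B : Type) : Prop := exists f : A -> B, bijective f.

Definition induced_adj (A : Type) (adjA : A -> A -> Prop) (P : A -> Prop) :
  {x : A | P x} -> {x : A | P x} -> Prop :=
  fun x y => adjA (proj1_sig x) (proj1_sig y).

(* f exhibits (the connected graph) A as a k-fold cover of B, where the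
   cardinal k is given as the cardinality of the type K: f is a local
   isomorphism all of whose fibres have cardinality |K| *)
Definition fold_cover (A B : Type) (adjA : A -> A -> Prop) (adjB : B -> B -> Prop)
  (f : A -> B) (K : Type) : Prop :=
  local_iso adjA adjB f /\ forall b : B, equipotent {x : A | f x = b} K.

Arguments induced_adj {A} adjA P _ _.
Arguments fold_cover {A B} adjA adjB f K.

(* Main.v *)
Require Import Defs.
From mathcomp Require Import all_boot.
From mathcomp Require Import monoid.
From Stdlib Require Import ProofIrrelevance ClassicalEpsilon.
Set Implicit Arguments.
Unset Strict Implicit.
Local Open Scope group_scope.

Lemma is_walk_cat (V : Type) (A : V -> V -> Prop) (x : V) (s t : seq V) :
  is_walk A (x :: s) -> is_walk A (last x s :: t) -> is_walk A (x :: s ++ t).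
Proof.
elim: s x => [|y s IH] x //= [Hxy Hs] Ht; split => //; exact: IH.
Qed.

Lemma wv_cons (V : Type) (N : groupType) (l : V -> V -> N) (x y : V) (s : seq V) :
  walk_voltage l (x :: y :: s) = l x y * walk_voltage l (y :: s).
Proof. by []. Qed.

Lemma wv_cat (V : Type) (N : groupType) (l : V -> V -> N) (x : V) (s t : seq V) :
  walk_voltage l (x :: s ++ t) = walk_voltage l (x :: s) * walk_voltage l (last x s :: t).
Proof.
elim: s x => [|y s IH] x; first by rewrite /= mul1g.
by rewrite cat_cons !wv_cons IH mulgA.
Qed.

Lemma reach_cons (V : Type) (A : V -> V -> Prop) x y z :
  A z x -> reachable A x y -> reachable A z y.
Proof. move=> Hzx [s [Hs Hl]]; exists (x :: s); by split. Qed.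

Lemma reach_snoc (V : Type) (A : V -> V -> Prop) a x y :
  reachable A a x -> A x y -> reachable A a y.
Proof.
move=> [s [Hs Hl]] Hxy; exists (s ++ [:: y]); split.
  by apply: is_walk_cat => //=; rewrite Hl.
by rewrite last_cat.
Qed.

Section W.
Variables (V : Type) (adj : V -> V -> Prop) (N : groupType) (l : V -> V -> N).
Hypothesis Hsym : forall u v, adj u v -> adj v u.
Hypothesis Hl : voltage_assignment adj l.

Definition wk x y g := exists s, [/\ is_walk adj (x :: s), last x s = y & g = walk_voltage l (x :: s)].

Lemma wk_nil x : wk x x 1.
Proof. by exists [::]. Qed.

Lemma wk_cat x y z g h : wk x y g -> wk y z h -> wk x z (g * h).
Proof.
move=> [s [Hs Hls ->]] [t [Ht Hlt ->]]; exists (s ++ t); split.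
- by apply: is_walk_cat => //; rewrite Hls.
- by rewrite last_cat Hls.
- by rewrite wv_cat Hls.
Qed.

Lemma wk_edge x y : adj x y -> wk x y (l x y).
Proof. by move=> H; exists [:: y]; rewrite /= mulg1. Qed.

Lemma wk_inv x y g : wk x y g -> wk y x g^-1.
Proof.
move=> [s [Hs <- ->]]; elim: s x Hs => [|z s IH] x.
  by rewrite /= invg1 => _; exact: wk_nil.
move=> [Hxz Hs]; rewrite wv_cons invgM [last _ _]/=.
apply: wk_cat; first exact: IH.
rewrite -Hl //; last exact: Hsym. exact: (wk_edge (Hsym Hxz)).
Qed.

Definition L := lift_adj adj l.

Lemma reach_lift x y : reachable L x y -> exists g, wk x.1 y.1 g /\ y.2 = g^-1 * x.2.
Proof.
move=> [s [Hs <-]]; elim: s x Hs => [|z s IH] x /=.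
  by move=> _; exists 1; split; [exact: wk_nil | rewrite invg1 mul1g].
move=> [[Hxz Hlxz] Hs]; have [g [Hg ->]] := IH z Hs.
exists (l x.1 z.1 * g); split; first exact: (wk_cat (wk_edge Hxz) Hg).
by rewrite invgM Hlxz invgM invgK -!mulgA mulVg mulg1.
Qed.

Lemma lift_reach u m b g : wk u b g -> reachable L (u, m) (b, g^-1 * m).
Proof.
move=> [s [Hs <- ->]]; elim: s u m Hs => [|z s IH] u m /=.
  by move=> _; rewrite invg1 mul1g; exists [::].
move=> [Huz Hs]; apply: (@reach_cons _ _ (z, (l u z)^-1 * m)).
  by split => //=; rewrite invgM invgK mulgA mulgV mul1g.
by rewrite invgM -mulgA; apply: IH.
Qed.
End W.

Lemma sig_eq (T : Type) (P : T -> Prop) (x y : sig P) : proj1_sig x = proj1_sig y -> x = y.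
Proof.
case: x => x Hx; case: y => y Hy /= E; subst y; congr exist; apply: proof_irrelevance.
Qed.

Lemma solve_mid (G : groupType) (a b c : G) : a * b * c = 1 -> b = a^-1 * c^-1.
Proof.
move=> H; have E := mulg1_eq H; by rewrite -E invgK mulKg.
Qed.

Lemma local_iso_comp (A B : Type) (adjA : A -> A -> Prop) (adjB : B -> B -> Prop) (f : A -> B) x0 :
  local_iso adjA adjB f ->
  local_iso (induced_adj adjA (reachable adjA x0)) adjB (fun x => f (proj1_sig x)).
Proof.
move=> [HA HB]; split.
  by move=> [x Hx] [y Hy]; rewrite /induced_adj /=; apply: HA.
move=> [x Hx]; have [Hi [Ho Hr]] := HB x; split; [|split].
- move=> [y Hy] [z Hz]; rewrite /induced_adj /= => Hxy Hxz E.
  by apply: sig_eq => /=; apply: Hi.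
- move=> b Hb; have [y [Hxy Hy]] := Ho b Hb.
  by exists (exist _ y (reach_snoc Hx Hxy)).
- by move=> [y Hy] [z Hz]; rewrite /induced_adj /=; apply: Hr.
Qed.

Unset Implicit Arguments.
Theorem lemma2p1 (V : Type) (adj : V -> V -> Prop) (N' N : groupType)
  (l' : V -> V -> N') (pi : N' -> N)
  (Hsimple : simple_graph adj) (Hconn : connected_graph adj)
  (Hl' : voltage_assignment adj l')
  (* N = N'/T : pi is a surjective homomorphism whose kernel is T, the normal
     closure of the voltages (wrt l') of all triangles *)
  (Hmul : forall x y : N', pi (x * y) = pi x * pi y)
  (Hsurj : forall n : N, exists x : N', pi x = n)
  (Hker : forall x : N', pi x = 1 <-> normal_closure (triangle_voltages adj l') x)
  (v0 : V) :
  let l := fun u v => pi (l' u v) in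
  let M := gen_subgroup (fun g : N => exists s : seq V,
             [/\ is_walk adj (v0 :: s), last v0 s = v0 & g = walk_voltage l (v0 :: s)]) in
  local_iso (lift_adj adj l) adj fst /\
  forall x0 : V * N,
    fold_cover (induced_adj (lift_adj adj l) (reachable (lift_adj adj l) x0)) adj
      (fun x => (proj1_sig x).1) {g : N | M g}.
Proof.
move=> l M.
have Hpi1 : pi 1 = 1.
  by apply: (@mulgI _ (pi 1)); rewrite -Hmul !mulg1.
have HpiV : forall x, pi x^-1 = (pi x)^-1.
  by move=> x; symmetry; apply: mulg1_eq; rewrite -Hmul mulgV.
have Hsym : forall u v, adj u v -> adj v u by case: Hsimple.
have Hl : voltage_assignment adj l by move=> u v Huv; rewrite /l Hl' // HpiV.
have Htri : forall u v w, adj u v -> adj v w -> adj w u -> l u v * l v w * l w u = 1.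
  move=> u v w Huv Hvw Hwu; rewrite /l -!Hmul; apply/Hker => H _ HS; apply: HS.
  by exists u, v, w; split.
have HLI : local_iso (lift_adj adj l) adj fst.
  split; first by move=> x y [].
  move=> [u m]; split; [|split].
  - move=> [v n] [w k] [/= _ H1] [/= _ H2] /= Evw; subst w.
    congr pair; apply: invg_inj; apply: (@mulgI _ m); by rewrite -H1 -H2.
  - move=> b Hub; exists (b, (l u b)^-1 * m); split => //; split => //=.
    by rewrite invgM invgK mulgA mulgV mul1g.
  - move=> [v n] [w k] [/= Huv H1] [/= Huw H2] /= Hvw; split => //=.
    have := Htri u v w Huv Hvw (Hsym _ _ Huw).
    rewrite (Hl w u) ?H1 ?H2; last exact: Hsym.
    move/solve_mid => ->.
    by rewrite !invgM !invgK mulgA mulgVK.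
split => //.
move=> [u0 m0]; split; first exact: local_iso_comp.
move=> b.
have HM : forall g, M g <-> wk adj l v0 v0 g.
  move=> g; split; last first.
    by move=> Hw H _ HS; apply: HS.
  apply; last by move=> s Hs.
  split; first exact: wk_nil.
  split; first by move=> x y; apply: wk_cat.
  by move=> x; apply: (wk_inv Hsym Hl).
have [p Hp] : {p | wk adj l v0 u0 p}.
  apply: constructive_indefinite_description.
  have [s [Hs Hls]] := Hconn v0 u0; by exists (walk_voltage l (v0 :: s)), s.
have [q Hq] : {q | wk adj l b v0 q}.
  apply: constructive_indefinite_description.
  have [s [Hs Hls]] := Hconn b v0; by exists (walk_voltage l (b :: s)), s.
pose R := reachable (lift_adj adj l) (u0, m0).
have fP : forall a : {x : {x : V * N | R x} | (proj1_sig x).1 = b},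
    M (p * (m0 * ((proj1_sig (proj1_sig a)).2)^-1) * q).
  move=> [[[v n] Hr] /= Hv]; subst v.
  have [g [/= Hg En]] := reach_lift Hr.
  have -> : m0 * n^-1 = g by rewrite En invgM invgK mulgA mulgV mul1g.
  by apply/HM; apply: wk_cat Hq; apply: wk_cat Hg.
have hP : forall g : {g : N | M g}, R (b, q * (proj1_sig g)^-1 * p * m0).
  move=> [g Hg] /=; have Hg' := (HM g).1 Hg.
  have -> : q * g^-1 * p * m0 = (p^-1 * g * q^-1)^-1 * m0 by rewrite !invgM !invgK !mulgA.
  apply: lift_reach; apply: wk_cat (wk_inv Hsym Hl Hq).
  by apply: wk_cat Hg'; apply: (wk_inv Hsym Hl).
exists (fun a => exist _ _ (fP a)).
exists (fun g => exist (fun x : {x : V * N | R x} => (proj1_sig x).1 = b)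
                 (exist _ (b, q * (proj1_sig g)^-1 * p * m0) (hP g)) erefl).
- move=> [[[v n] Hr] /= Hv]; apply: sig_eq; apply: sig_eq => /=.
  rewrite Hv; congr pair.
  by rewrite !invgM !invgK !mulgA mulgV mul1g !mulgVK.
- move=> [g Hg]; apply: sig_eq => /=.
  by rewrite !invgM !invgK !mulgA mulgK mulgV mul1g mulgVK.
Qed.
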